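(* Let $\phi$ be a propositional CNF formula and run Algorithm 1 (described in the context) on $\phi$ with an arbitrary decomposition $\psi_1,\dots,\psi_k$. If the algorithm returns $\top$, then $\phi$ is satisfiable; if it returns $\bot$, then $\phi$ is unsatisfiable.
   Context: A formula in CNF is a conjunction of clauses (disjunctions of literals); $V_\chi$ denotes the set of variables of $\chi$. Given formulas $A,B$ with $A\wedge B$ unsatisfiable, an interpolant for $\neg(A\wedge B)$ is a formula $I$ with $A\Rightarrow I$, $I\Rightarrow\neg B$, and $V_I\subseteq V_A\cap V_B$. Algorithm 1: decompose $\phi$ into formulas $\psi_1,\dots,\psi_k$, each being a conjunction of clauses of $\phi$, with $\phi\equiv\psi_1\wedge\dots\wedge\psi_k$ (no requirement that they share no variables). Let $V=\bigcup_{i\neq j}(V_{\psi_i}\cap V_{\psi_j})$ be the shared variables. Set $G:=\top$ and repeat: if $G$ is unsatisfiable, return $\bot$; otherwise pick an assignment $m$ to all variables of $V$ satisfying $G$ (viewed as a conjunction of literals). For each $i=1,\dots,k$: if $\psi_i\wedge m$ is unsatisfiable, compute an interpolant $I$ for $\neg(\psi_i\wedge m)$ (so its variables lie in $V_{\psi_i}\cap V$) and set $G:=G\wedge I$. If no $\psi_i\wedge m$ was unsatisfiable in this round, return $\top$; otherwise repeat. *)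

(* Defs.v *)
From mathcomp Require Import all_boot.
Set Implicit Arguments. Unset Strict Implicit. Unset Printing Implicit Defensive.

(* General propositional formulas (interpolants need not be CNF). *)
Inductive form : Type :=
| FTop : form
| FBot : form
| FVar : nat -> form
| FNeg : form -> form
| FAnd : form -> form -> form
| FOr  : form -> form -> form.

Fixpoint eval (a : nat -> bool) (f : form) : bool :=
  match f with
  | FTop => true
  | FBot => false
  | FVar x => a x
  | FNeg g => ~~ eval a g
  | FAnd g h => eval a g && eval a h
  | FOr g h => eval a g || eval a h
  end.

Fixpoint vars (f : form) : seq nat :=
  match f with
  | FTop | FBot => [::]
  | FVar x => [:: x]
  | FNeg g => vars g
  | FAnd g h | FOr g h => vars g ++ vars h
  end.

Definition satisfiable (f : form) : Prop := exists a : nat -> bool, eval a f.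

(* CNF: a literal is (variable, polarity), a clause is a disjunction of
   literals, a CNF is a conjunction of clauses. *)
Definition literal := (nat * bool)%type.
Definition clause := seq literal.
Definition cnf := seq clause.

Definition lit_form (l : literal) : form :=
  if l.2 then FVar l.1 else FNeg (FVar l.1).
Definition clause_form (c : clause) : form := foldr (fun l acc => FOr (lit_form l) acc) FBot c.
Definition cnf_form (p : cnf) : form := foldr (fun c acc => FAnd (clause_form c) acc) FTop p.
Definition cnf_vars (p : cnf) : seq nat := vars (cnf_form p).

Definition big_and (fs : seq form) : form := foldr FAnd FTop fs.

Definition decomposition (phi : cnf) (psis : seq cnf) : Prop :=
  (forall psi, psi \in psis -> forall c, c \in psi -> c \in phi) /\
  (forall a, eval a (cnf_form phi) = eval a (big_and (map cnf_form psis))).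

(* Shared variables V = U_{i<>j} (V_{psi_i} cap V_{psi_j}). *)
Definition shared_vars (psis : seq cnf) : seq nat :=
  let k := size psis in
  undup [seq x <- flatten (map cnf_vars psis) |
          has (fun i => has (fun j => [&& i != j,
                 x \in cnf_vars (nth [::] psis i) & x \in cnf_vars (nth [::] psis j)])
               (iota 0 k)) (iota 0 k)].

Definition assign_form (V : seq nat) (m : nat -> bool) : form :=
  big_and [seq lit_form (x, m x) | x <- V].

Definition interpolant (A B I : form) : Prop :=
  (forall a, eval a A -> eval a I) /\
  (forall a, eval a I -> ~~ eval a B) /\
  {subset vars I <= vars A} /\ {subset vars I <= vars B}.

(* One round of the inner loop of Algorithm 1, for a fixed assignment m:
   [round V m psis G G' b] means: processing psis in order starting from G ends
   with G', and b records whether some psi_i /\ m was unsatisfiable. *)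
Inductive round (V : seq nat) (m : nat -> bool) : seq cnf -> form -> form -> bool -> Prop :=
| round_nil : forall G, round V m [::] G G false
| round_sat : forall psi rest G G' b,
    satisfiable (FAnd (cnf_form psi) (assign_form V m)) ->
    round V m rest G G' b -> round V m (psi :: rest) G G' b
| round_unsat : forall psi rest G G' b I,
    ~ satisfiable (FAnd (cnf_form psi) (assign_form V m)) ->
    interpolant (cnf_form psi) (assign_form V m) I ->
    round V m rest (FAnd G I) G' b -> round V m (psi :: rest) G G' true.

(* [run psis G r]: a (terminating) execution of the main loop of Algorithm 1
   from the current value G returns r (true = top, false = bottom).
   The choices of m and of the interpolants are arbitrary (nondeterministic). *)
Inductive run (psis : seq cnf) : form -> bool -> Prop :=
| run_bot : forall G, ~ satisfiable G -> run psis G false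
| run_top : forall G m G',
    eval m G ->
    round (shared_vars psis) m psis G G' false -> run psis G true
| run_loop : forall G m G' r,
    eval m G ->
    round (shared_vars psis) m psis G G' true ->
    run psis G' r -> run psis G r.

(* Main.v *)
From Stdlib Require Import ClassicalEpsilon.
Require Import Defs.
From mathcomp Require Import all_boot.
Set Implicit Arguments. Unset Strict Implicit.

Lemma eval_ext a b f : (forall x, x \in vars f -> a x = b x) -> eval a f = eval b f.
Proof.
elim: f => //= [x|g IH|g IHg h IHh|g IHg h IHh] H.
- by apply: H; rewrite inE.
- by rewrite IH.
- by rewrite IHg ?IHh // => x Hx; apply: H; rewrite mem_cat Hx ?orbT.
- by rewrite IHg ?IHh // => x Hx; apply: H; rewrite mem_cat Hx ?orbT.
Qed.

Lemma eval_big_and a fs : eval a (big_and fs) = all (eval a) fs.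
Proof. by elim: fs => //= f fs ->. Qed.

Lemma assign_eval a V m : eval a (assign_form V m) -> forall x, x \in V -> a x = m x.
Proof.
rewrite /assign_form eval_big_and all_map => /allP H x Hx.
move: (H x Hx); rewrite /= /lit_form /=; case: (m x) => /=; case: (a x).
all: by [].
Qed.

Lemma round_false V m ps G G' b : round V m ps G G' b -> b = false ->
  forall psi, psi \in ps -> satisfiable (FAnd (cnf_form psi) (assign_form V m)).
Proof.
elim => //= psi rest G0 G1 b0 Hs Hr IH Hb q; rewrite inE => /orP [/eqP ->|Hq] //.
exact: IH.
Qed.

Lemma round_inv V m ps G G' b a : round V m ps G G' b ->
  (forall psi, psi \in ps -> eval a (cnf_form psi)) -> eval a G -> eval a G'.
Proof.
elim => [G0 _ //|psi rest G0 G1 b0|psi rest G0 G1 b0].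
- move=> _ _ IH H HG; apply: IH => // q Hq; apply: H; by rewrite inE Hq orbT.
- move=> I _ [HI _] _ IH H HG; apply: IH => [q Hq|]; first by apply: H; rewrite inE Hq orbT.
  by rewrite /= HG /=; apply: HI; apply: H; rewrite inE eqxx.
Qed.

Lemma run_false psis G r : run psis G r -> r = false -> forall a,
  (forall psi, psi \in psis -> eval a (cnf_form psi)) -> eval a G -> False.
Proof.
elim => [G0 Hns _ a _ HG|//|G0 m G1 r0 _ Hr _ IH Hr0 a H HG].
- by apply: Hns; exists a.
- exact: (IH Hr0 a H (round_inv Hr H HG)).
Qed.

Lemma run_true psis G r : run psis G r -> r = true -> exists m,
  forall psi, psi \in psis ->
    satisfiable (FAnd (cnf_form psi) (assign_form (shared_vars psis) m)).
Proof.
elim => [//|G0 m G1 _ Hr _|G0 m G1 r0 _ _ _ IH Hr0]; last exact: IH.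
by exists m; apply: (round_false Hr).
Qed.

Lemma combine psis m :
  (forall psi, psi \in psis ->
    satisfiable (FAnd (cnf_form psi) (assign_form (shared_vars psis) m))) ->
  exists a, forall psi, psi \in psis -> eval a (cnf_form psi).
Proof.
move=> H.
have H' : forall psi, exists a, psi \in psis ->
    eval a (FAnd (cnf_form psi) (assign_form (shared_vars psis) m)).
  move=> psi; case: (boolP (psi \in psis)) => Hin.
    by case: (H _ Hin) => a Ha; exists a.
  by exists (fun _ => true).
pose sel psi := proj1_sig (constructive_indefinite_description _ (H' psi)).
have Hsel : forall psi, psi \in psis ->
    eval (sel psi) (FAnd (cnf_form psi) (assign_form (shared_vars psis) m)).
  by move=> psi; rewrite /sel; case: (constructive_indefinite_description _ _).
set V := shared_vars psis.
set k := size psis.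
pose cv j := cnf_vars (nth [::] psis j).
exists (fun x => if x \in V then m x else
          sel (nth [::] psis (find (fun j => x \in cv j) (iota 0 k))) x).
move=> psi Hpsi.
move: (Hsel psi Hpsi) => /= /andP [Hp Ha].
rewrite (@eval_ext _ (sel psi)) //; move=> x Hx.
case: ifP => HV; first by rewrite (assign_eval Ha HV).
set i := index psi psis.
have Hi : i < k by rewrite index_mem.
have Hni : nth [::] psis i = psi by rewrite nth_index.
have Hhas : has (fun j => x \in cv j) (iota 0 k).
  by apply/hasP; exists i; rewrite ?mem_iota //= /cv Hni.
set j := find _ _.
have Hj : j < k by move: Hhas; rewrite has_find size_iota.
have Hxj : x \in cv j.
  by move: (nth_find 0 Hhas); rewrite -/j nth_iota.
case: (eqVneq j i) => [->|Hne]; first by rewrite Hni.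
exfalso; move/negP: HV; apply.
rewrite /V /shared_vars mem_undup mem_filter; apply/andP; split.
  apply/hasP; exists j; first by rewrite mem_iota.
  apply/hasP; exists i; first by rewrite mem_iota.
  by rewrite Hne Hxj /= /cv Hni.
apply/flattenP; exists (cnf_vars psi) => //; exact: map_f.
Qed.

Theorem mainTheorem2 (phi : cnf) (psis : seq cnf) :
  decomposition phi psis ->
  (run psis FTop true -> satisfiable (cnf_form phi)) /\
  (run psis FTop false -> ~ satisfiable (cnf_form phi)).
Proof.
move=> [_ Hdec]; split.
- move=> Hr; case: (run_true Hr erefl) => m Hm.
  case: (combine Hm) => a Ha; exists a.
  rewrite Hdec eval_big_and all_map; apply/allP => psi Hp; exact: Ha.
- move=> Hr [a Ha]; apply: (run_false Hr erefl (a := a)) => //.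
  move=> psi Hp; move: Ha; rewrite Hdec eval_big_and all_map => /allP H.
  exact: H.
Qed.
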